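(* Let $d\geq 1$, let $p_1<p_2<\dots<p_d$ be the first $d$ prime numbers, let $N\geq 1$ be an integer, and let $C>1$ and $\sigma\in\mathbb{R}$. Let $\mathbf{S}_1$ be the $(d+1)\times d$ real matrix whose $i$-th column ($1\le i\le d$) has entry $\ln p_i$ in row $i$, entry $C\ln p_i$ in row $d+1$, and zeros elsewhere, and let $\mathbf{t}=(0,\dots,0,C\ln N)^T\in\mathbb{R}^{d+1}$. Let $\mathbf{z}=(z_1,\dots,z_d)\in\mathbb{Z}^{d}$ and put $$u=\prod_{1\le i\le d,\ z_i>0}p_i^{z_i},\qquad k=\prod_{1\le i\le d,\ z_i<0}p_i^{-z_i}.$$ If $$\|\mathbf{S}_1\mathbf{z}-\mathbf{t}\|_1\leq 2\ln C+2\sigma\ln p_d-\ln N,$$ then $|u-kN|\leq p_d^{\sigma}$.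
   Context: $\ln$ denotes the natural logarithm and $\|\cdot\|_1$ the $\ell^1$ norm on $\mathbb{R}^{d+1}$. Empty products equal $1$. *)

(* Defs.v *)
From HB Require Import structures.
From mathcomp Require Import all_boot all_order all_algebra.
From mathcomp Require Import all_classical all_reals all_analysis.
Set Implicit Arguments. Unset Strict Implicit. Unset Printing Implicit Defensive.
Import Order.TTheory GRing.Theory Num.Theory.
Local Open Scope ring_scope.

(* [first_primes d p] : p 0 < p 1 < ... < p (d-1) are exactly the first d primes
   (the paper's p_1 < ... < p_d, shifted to 0-based indices). *)
Definition first_primes (d : nat) (p : nat -> nat) : Prop :=
  (forall i, (i < d)%N -> prime (p i)) /\
  (forall i j, (i < j)%N -> (j < d)%N -> (p i < p j)%N) /\
  (forall q, prime q -> (q <= p d.-1)%N -> exists2 i, (i < d)%N & p i = q).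

Definition S1mat (R : realType) (d : nat) (p : nat -> nat) (C : R) : 'M[R]_(d.+1, d) :=
  \matrix_(i < d.+1, j < d)
     (if (i : nat) == (j : nat) then ln ((p j)%:R : R)
      else if (i : nat) == d then C * ln ((p j)%:R : R) else 0).

Definition tvec (R : realType) (d : nat) (C : R) (N : nat) : 'cV[R]_(d.+1) :=
  \col_(i < d.+1) (if (i : nat) == d then C * ln (N%:R : R) else 0).

Definition l1norm (R : realType) (n : nat) (v : 'cV[R]_n) : R :=
  \sum_(i < n) `|v i ord0|.

Definition u_of (d : nat) (p : nat -> nat) (z : 'cV[int]_d) : nat :=
  (\prod_(i < d | (0 < z i ord0)%R) p i ^ `|z i ord0|%N)%N.
Definition k_of (d : nat) (p : nat -> nat) (z : 'cV[int]_d) : nat :=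
  (\prod_(i < d | (z i ord0 < 0)%R) p i ^ `|z i ord0|%N)%N.

(* Main.v *)
Require Import Defs.
Set Warnings "-notation-overridden,-ambiguous-paths,-notation-incompatible-prefix".
From HB Require Import structures.
From mathcomp Require Import all_boot all_order all_algebra.
From mathcomp Require Import all_classical all_reals all_analysis.
From mathcomp Require Import ring lra.
Import Order.TTheory GRing.Theory Num.Theory.
Local Open Scope ring_scope.

Lemma ln_le_sub1 (R : realType) (x : R) : 0 < x -> ln x <= x - 1.
Proof.
move=> x0; have := @le_ln1Dx R (x - 1); rewrite addrCA subrr addr0; apply; lra.
Qed.

Lemma key_ineq (R : realType) (C t : R) : 1 < C -> 0 < t -> t < 1 ->
  2 * ln C + 2 * ln (1 - t) + (C - 1) * ln t <= 0.
Proof.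
move=> C1 t0 t1.
set t0' := (C - 1) / (C + 1).
have Cp : 0 < C + 1 by lra.
have Cm : 0 < C - 1 by lra.
have t0p : 0 < t0' by rewrite /t0' divr_gt0.
have e1 : 1 - t0' = 2 / (C + 1) by rewrite /t0'; field; lra.
have t0q : 0 < 1 - t0' by rewrite e1 divr_gt0.
have h1 : ln t - ln t0' <= t / t0' - 1.
  by rewrite -ln_div ?posrE //; apply: ln_le_sub1; apply: divr_gt0.
have h2 : ln (1 - t) - ln (1 - t0') <= (1 - t) / (1 - t0') - 1.
  have t1q : 0 < 1 - t by lra. by rewrite -ln_div ?posrE //; apply: ln_le_sub1; apply: divr_gt0.
have h3 : ln t0' <= t0' - 1 by apply: ln_le_sub1.
have h4 : ln C + ln (1 - t0') <= C * (1 - t0') - 1.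
  have C0 : 0 < C by lra. by rewrite -lnM ?posrE //; apply: ln_le_sub1; apply: mulr_gt0.
have h13 := ler_wpM2l (ltW Cm) (lerD h1 h3).
have E : 2 * ((1 - t) / (1 - t0') - 1) + 2 * (C * (1 - t0') - 1)
   + (C - 1) * (t / t0' - 1 + (t0' - 1)) = 0.
  rewrite e1 /t0'; field; lra.
have : 2 * (ln (1 - t) - ln (1 - t0')) + 2 * (ln C + ln (1 - t0'))
   + (C - 1) * (ln t - ln t0' + ln t0') <= 0.
  rewrite -E; apply: lerD; last exact: h13.
  apply: lerD; apply: ler_wpM2l => //; lra.
set a := ln (1 - t); set b := ln (1 - t0'); set c := ln C; set d := ln t; set e := ln t0'.
move=> H; have -> : 2 * c + 2 * a + (C - 1) * d = 2 * (a - b) + 2 * (c + b) + (C - 1) * (d - e + e) by ring.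
exact: H.
Qed.

Lemma main_ineq (R : realType) (X Y A C : R) : 1 < C -> 0 < Y -> Y < X -> 0 < A ->
  ln X + ln Y + C * (ln X - ln Y) <= 2 * ln C + 2 * ln A -> X - Y <= A.
Proof.
move=> C1 Y0 YX A0 H.
have X0 : 0 < X by apply: lt_trans YX.
set t := Y / X.
have t0 : 0 < t by rewrite divr_gt0.
have t1 : t < 1 by rewrite ltr_pdivrMr // mul1r.
have EY : ln Y = ln X + ln t.
  by rewrite -lnM ?posrE // /t mulrC divfK // gt_eqF.
have EXY : X - Y = X * (1 - t) by rewrite /t mulrBr mulr1 mulrC divfK // gt_eqF.
have K := @key_ineq R C t C1 t0 t1.
rewrite -(@ler_ln R) ?posrE ?subr_gt0 // EXY lnM ?posrE ?subr_gt0 //.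
rewrite EY in H.
set a := ln X in H *; set b := ln t in H K *; set c := ln (1 - t) in K *.
set e := ln C in H K *; set f := ln A in H *.
have : 2 * (a + c) <= 2 * f.
  have -> : 2 * (a + c) = (a + (a + b) + C * (a - (a + b))) + (2 * e + 2 * c + (C - 1) * b) - 2 * e by ring.
  lra.
lra.
Qed.
Lemma ln_prod (R : realType) (n : nat) (P : pred 'I_n) (F : 'I_n -> R) :
  (forall i, P i -> 0 < F i) ->
  ln (\prod_(i < n | P i) F i) = \sum_(i < n | P i) ln (F i).
Proof.
move=> H.
suff [] : 0 < \prod_(i < n | P i) F i /\ ln (\prod_(i < n | P i) F i) = \sum_(i < n | P i) ln (F i) by [].
apply: (big_ind2 (fun a b => 0 < a /\ ln a = b)).
- by rewrite ln1.
- move=> a b a' b' [a0 <-] [b0 <-]; split; first exact: mulr_gt0.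
  by rewrite lnM.
- by move=> i Pi; split => //; apply: H.
Qed.

Theorem theorem2 (R : realType) (d : nat) (p : nat -> nat) (N : nat) (C sigma : R)
  (z : 'cV[int]_d) :
  (1 <= d)%N -> first_primes d p -> (1 <= N)%N -> 1 < C ->
  @l1norm R d.+1 (@S1mat R d p C *m map_mx (fun x : int => x%:~R) z - @tvec R d C N)
    <= 2 * ln C + 2 * sigma * ln ((p d.-1)%:R) - ln (N%:R) ->
  `| ((@u_of d p z)%:R : R) - ((@k_of d p z * N)%N)%:R | <= ((p d.-1)%:R) `^ sigma.
Proof.
move=> d1 [pr [_ _]] N1 C1 H.
have pgt0 : forall i : 'I_d, 0 < ((p i)%:R : R).
  by move=> i; rewrite ltr0n prime_gt0 // pr.
have lpge0 : forall i : 'I_d, 0 <= ln ((p i)%:R : R).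
  by move=> i; apply: ln_ge0; rewrite ler1n prime_gt0 // pr.
set lp := fun i : 'I_d => ln ((p i)%:R : R).
set zr := fun i : 'I_d => ((z i ord0)%:~R : R).
have E1 : @l1norm R d.+1 (@S1mat R d p C *m map_mx (fun x : int => x%:~R) z - @tvec R d C N)
   = \sum_(i < d) lp i * `|zr i| + C * `|\sum_(i < d) lp i * zr i - ln (N%:R : R)|.
  rewrite /l1norm big_ord_recr /=; congr (_ + _).
    apply: eq_bigr => i _.
    rewrite !mxE (bigD1 i) //= big1 ?addr0.
      rewrite !mxE eqxx (ltn_eqF (ltn_ord i)) subr0 normrM (ger0_norm (lpge0 i)) //.
    move=> j /negbTE ji; rewrite !mxE /=.
    have hij : ((i:nat) == j) = false by rewrite eq_sym; exact: ji.
    by rewrite hij (ltn_eqF (ltn_ord i)) mul0r.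
  rewrite !mxE /= eqxx.
  have C0 : 0 < C by lra.
  rewrite -(gtr0_norm C0) -normrM mulrBr big_distrr /= (gtr0_norm C0).
  congr (`| _ - _ |); apply: eq_bigr => j _.
  by rewrite !mxE /= (gtn_eqF (ltn_ord j)) eqxx mulrA.
have Eu : ln ((u_of p z)%:R : R) = \sum_(i < d) (if 0 < z i ord0 then lp i * `|zr i| else 0).
  rewrite /u_of natr_prod ln_prod; last by move=> i _; rewrite natrX exprn_gt0.
  rewrite big_mkcond; apply: eq_bigr => i _; case: ifP => // _.
  by rewrite natrX lnXn // -[ln _ *+ _]mulr_natr natr_absz intr_norm.
have Ek : ln ((k_of p z)%:R : R) = \sum_(i < d) (if z i ord0 < 0 then lp i * `|zr i| else 0).
  rewrite /k_of natr_prod ln_prod; last by move=> i _; rewrite natrX exprn_gt0.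
  rewrite big_mkcond; apply: eq_bigr => i _; case: ifP => // _.
  by rewrite natrX lnXn // -[ln _ *+ _]mulr_natr natr_absz intr_norm.
have Es : \sum_(i < d) lp i * `|zr i| = ln ((u_of p z)%:R : R) + ln ((k_of p z)%:R : R).
  rewrite Eu Ek -big_split; apply: eq_bigr => i _ /=.
  case: (ltgtP (z i ord0) 0) => h.
  - by rewrite add0r.
  - by rewrite addr0.
  - by rewrite /zr h mulr0z normr0 mulr0 addr0.
have EL : \sum_(i < d) lp i * zr i = ln ((u_of p z)%:R : R) - ln ((k_of p z)%:R : R).
  rewrite Eu Ek -sumrB; apply: eq_bigr => i _ /=.
  case: (ltgtP (z i ord0) 0) => h.
  - by rewrite sub0r ltr0_norm ?ltrz0 // mulrN opprK.
  - by rewrite subr0 gtr0_norm ?ltr0z.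
  - by rewrite /zr h mulr0z mulr0 subr0.
rewrite E1 Es EL in H.
have u0 : (0 < u_of p z)%N.
  rewrite /u_of; apply: prodn_gt0 => j; rewrite expn_gt0 prime_gt0 //; exact: pr (ltn_ord j).
have k0 : (0 < k_of p z)%N.
  rewrite /k_of; apply: prodn_gt0 => j; rewrite expn_gt0 prime_gt0 //; exact: pr (ltn_ord j).
have pd0 : (0 < p d.-1)%N by rewrite prime_gt0 // pr // ltn_predL.
set A := ((p d.-1)%:R : R) `^ sigma.
have A0 : 0 < A by apply: powR_gt0; rewrite ltr0n.
have lnA : ln A = sigma * ln ((p d.-1)%:R : R) by rewrite ln_powR.
set U := ((u_of p z)%:R : R).
set K := (((k_of p z * N)%N)%:R : R).
have U0 : 0 < U by rewrite ltr0n.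
have K0 : 0 < K by rewrite ltr0n muln_gt0 k0.
have lnK : ln K = ln ((k_of p z)%:R : R) + ln (N%:R : R).
  by rewrite /K natrM lnM // posrE ltr0n.
have H2 : ln U + ln K + C * `|ln U - ln K| <= 2 * ln C + 2 * ln A.
  rewrite lnK lnA; move: H; rewrite -/U.
  have -> : ln U - (ln ((k_of p z)%:R : R) + ln (N%:R : R)) = ln U - ln ((k_of p z)%:R : R) - ln (N%:R : R) by ring.
  lra.
have C0 : 0 <= C by lra.
case: (ltgtP U K) => h.
- rewrite ltr0_norm ?subr_lt0 // opprB; apply: (@main_ineq R K U A C C1 U0 h A0).
  apply: le_trans H2; rewrite [ln U + _]addrC lerD2l; apply: ler_wpM2l => //.
  by rewrite distrC ler_norm.
- rewrite gtr0_norm ?subr_gt0 //; apply: (@main_ineq R U K A C C1 K0 h A0).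
  apply: le_trans H2; rewrite lerD2l; apply: ler_wpM2l => //.
  exact: ler_norm.
- by rewrite h subrr normr0 ltW.
Qed.
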